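(* Let $\mathcal S(a,b;r)=(S_{n,k}(a,b;r))_{n,k\ge0}$ (infinite lower-triangular matrix). (i) $\mathcal S(a,c;r_1+r_2)=\mathcal S(a,b;r_1)\,\mathcal S(b,c;r_2)$ for all complex $a,b,c,r_1,r_2$; moreover $\mathcal S(a,a;0)$ is the identity matrix, so $\mathcal S(a,b;r)^{-1}=\mathcal S(b,a;-r)$. (ii) For nonnegative integers $n,k,k_1,k_2$ with $k=k_1+k_2$, $$\frac{k!}{k_1!\,k_2!}S_{n,k}(a,b;r_1+r_2)=\sum\frac{n!}{n_1!\,n_2!}S_{n_1,k_1}(a,b;r_1)\,S_{n_2,k_2}(a,b;r_2),$$ summed over nonnegative $n_1,n_2$ with $n_1+n_2=n$, $n_1\ge k_1$, $n_2\ge k_2$. (iii) For nonnegative integers $k,n_1,n,k_2$ with $n_1=n+k_2$, $$\frac{n_1!}{n!\,k_2!}S_{n,k}(a,b;r_1+r_2)=\sum\frac{k_1!}{k!\,n_2!}S_{n_1,k_1}(a,b;r_1)\,S_{n_2,k_2}(b,a;r_2),$$ summed over nonnegative $k_1,n_2$ with $k_1=k+n_2$, $n_1\ge k_1$, $n_2\ge k_2$ (note $a,b$ interchanged in the second factor).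
   Context: Hsu–Shiue Stirling numbers $S_{n,k}(a,b;r)$: defined by $S_{0,0}=1$, $S_{n,k}=0$ if $n<0$, $k<0$ or $k>n$, and $S_{n+1,k+1}=[-an+b(k+1)+r]S_{n,k+1}+S_{n,k}$ for $n\ge0$, $k\in\mathbb Z$. *)

(* Defs.v *)
From HB Require Import structures.
From mathcomp Require Import all_boot all_order all_algebra.
From mathcomp Require Import reals.
From mathcomp Require Import complex.
Set Implicit Arguments. Unset Strict Implicit. Unset Printing Implicit Defensive.
Import Order.TTheory GRing.Theory Num.Theory.
Local Open Scope ring_scope.

(* Hsu--Shiue Stirling numbers S_{n,k}(a,b;r), for n,k >= 0 (entries with
   k < 0 vanish and are not represented):
   S_{0,0}=1, S_{0,k}=0 (k>0),
   S_{n+1,0}   = (-a n + r) S_{n,0}                 (the k = -1 case),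
   S_{n+1,k+1} = (-a n + b(k+1) + r) S_{n,k+1} + S_{n,k}. *)
Fixpoint hsS (F : pzRingType) (a b r : F) (n k : nat) {struct n} : F :=
  match n, k with
  | 0, 0 => 1
  | 0, _.+1 => 0
  | n'.+1, 0 => (- a * n'%:R + r) * hsS a b r n' 0
  | n'.+1, k'.+1 =>
      (- a * n'%:R + b * k'.+1%:R + r) * hsS a b r n' k'.+1 + hsS a b r n' k'
  end.

Definition ltmat (F : Type) := nat -> nat -> F.

Definition hsMat (F : pzRingType) (a b r : F) : ltmat F := fun n k => hsS a b r n k.

(* Product of lower-triangular infinite matrices: (AB)_{n,k} = sum_{j<=n} A_{n,j} B_{j,k}
   (A_{n,j} = 0 for j > n, so this is the full matrix product). *)
Definition ltmul (F : pzRingType) (A B : ltmat F) : ltmat F :=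
  fun n k => \sum_(0 <= j < n.+1) A n j * B j k.

Definition ltid (F : pzRingType) : ltmat F := fun n k => (n == k)%:R.

(* Main.v *)
Require Import Defs.
From HB Require Import structures.
From mathcomp Require Import all_boot all_order all_algebra.
From mathcomp Require Import reals.
From mathcomp Require Import complex.
Import Order.TTheory GRing.Theory Num.Theory.
From mathcomp Require Import ring.
From Stdlib Require Import FunctionalExtensionality.
Set Implicit Arguments. Unset Strict Implicit. Unset Printing Implicit Defensive.
Local Open Scope ring_scope.



Section Gen.
Variable F : comNzRingType.
Implicit Types a b c r : F.

Definition hm a b r (n k : nat) : F := if k is k'.+1 then hsS a b r n k' else 0.

Lemma hm0 a b r n : hm a b r n 0 = 0. Proof. by []. Qed.
Lemma hmS a b r n k : hm a b r n k.+1 = hsS a b r n k. Proof. by []. Qed.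

Lemma hsS_rec a b r n k : hsS a b r n.+1 k =
  (- a * n%:R + b * k%:R + r) * hsS a b r n k + hm a b r n k.
Proof. by case: k => [|k] /=; rewrite ?mulr0 ?addr0. Qed.

Lemma hsS_gt a b r n k : (n < k)%N -> hsS a b r n k = 0.
Proof.
elim: n k => [|n IH] [|k] //= H.
by rewrite !IH ?mulr0 ?addr0 // ltnW.
Qed.

Lemma hm_gt a b r n k : (n.+1 < k)%N -> hm a b r n k = 0.
Proof. by case: k => [//|k] H /=; rewrite hsS_gt. Qed.

Lemma hsS_diag a b r n : hsS a b r n n = 1.
Proof. by elim: n => [|n IH] //=; rewrite hsS_gt // mulr0 add0r. Qed.

Lemma sum_cut (f : nat -> F) m M : (m <= M)%N -> (forall j, (m <= j)%N -> f j = 0) ->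
  \sum_(0 <= j < M) f j = \sum_(0 <= j < m) f j.
Proof.
move=> mM H; rewrite (@big_cat_nat _ _ _ m 0 M) //=.
rewrite [X in _ + X]big_nat_cond [X in _ + X]big1 ?addr0 //.
by move=> j /andP[/andP[Hj _] _]; apply: H.
Qed.

End Gen.
Arguments hm {F}.


Section Gen.
Variable F : comNzRingType.
Implicit Types a b c r : F.

Lemma comp_lem a b c r1 r2 n k : hsS a c (r1 + r2) n k =
  \sum_(0 <= j < n.+1) hsS a b r1 n j * hsS b c r2 j k.
Proof.
elim: n k => [|n IH] k.
  by rewrite big_nat1 /=; case: k => //=; rewrite mul1r.
rewrite hsS_rec.
under eq_bigr do rewrite hsS_rec mulrDl.
rewrite big_split /= [X in _ = _ + X]big_nat_recl // hm0 mul0r add0r.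
under [X in _ = _ + X]eq_bigr do rewrite hmS.
rewrite (@sum_cut _ _ n.+1) //; last by move=> j Hj; rewrite hsS_gt // mulr0 mul0r.
under [X in _ = _ + X]eq_bigr do rewrite hsS_rec.
rewrite -big_split /=.
rewrite (eq_bigr (fun i => (- a * n%:R + c * k%:R + (r1 + r2)) * (hsS a b r1 n i * hsS b c r2 i k)
     + hsS a b r1 n i * hm b c r2 i k)); last by move=> i _; ring.
rewrite big_split /= -mulr_sumr.
rewrite -IH; congr (_ + _).
case: k => [|k]; first by rewrite hm0 big1 // => i _; rewrite hm0 mulr0.
by rewrite hmS IH; under eq_bigr do rewrite hmS.
Qed.

Lemma id_lem a n k : hsS a a 0 n k = (n == k)%:R.
Proof.
elim: n k => [|n IH] k; first by case: k.
rewrite hsS_rec IH; case: k => [|k].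
  rewrite hm0 addr0; case: eqP => [->|_]; last by rewrite mulr0.
  by rewrite /= !mulr0 !addr0 mulr1.
rewrite hmS IH eqSS; case: (eqVneq n k.+1) => [->|nk]; last by rewrite mulr0 add0r.
by rewrite addr0 mulNr addNr mul0r add0r.
Qed.

End Gen.


Section Gen.
Variable F : comNzRingType.

Lemma leib (f g : nat -> F) n :
  \sum_(0 <= i < n.+2) 'C(n.+1, i)%:R * f i * g (n.+1 - i)%N =
  \sum_(0 <= i < n.+1) 'C(n, i)%:R * (f i.+1 * g (n - i)%N + f i * g (n.+1 - i)%N).
Proof.
rewrite big_nat_recl // bin0.
rewrite (eq_bigr (fun i => 'C(n,i.+1)%:R * f i.+1 * g (n-i)%N + 'C(n,i)%:R * f i.+1 * g (n-i)%N));
  last by move=> i _; rewrite binS natrD subSS !mulrDl.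
rewrite big_split /=.
rewrite [X in _ = X](eq_bigr (fun i => 'C(n,i)%:R * f i.+1 * g (n-i)%N + 'C(n,i)%:R * f i * g (n.+1-i)%N));
  last by move=> i _; rewrite mulrDr !mulrA.
rewrite [X in _ = X]big_split /= [X in _ = _ + X]big_nat_recl // bin0 subn0.
rewrite big_nat_recr //= bin_small // mul0r mul0r addr0.
rewrite (eq_bigr (fun i => 'C(n,i.+1)%:R * f i.+1 * g (n-i)%N) (F1 := fun i => 'C(n,i.+1)%:R * f i.+1 * g (n.+1-i.+1)%N)); last by move=> i _; rewrite subSS.
by rewrite addrA addrC.
Qed.

Variables (a b r1 r2 : F).
Notation A := (hsS a b r1).
Notation B := (hsS a b r2).
Notation T := (hsS a b (r1 + r2)).

Definition U n k1 k2 := \sum_(0 <= i < n.+1) 'C(n, i)%:R * A i k1 * B (n - i)%N k2.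

Lemma U_step n k1 k2 : U n.+1 k1 k2 =
  (- a * n%:R + b * (k1 + k2)%:R + (r1 + r2)) * U n k1 k2
  + \sum_(0 <= i < n.+1) 'C(n, i)%:R * hm a b r1 i k1 * B (n - i)%N k2
  + \sum_(0 <= i < n.+1) 'C(n, i)%:R * A i k1 * hm a b r2 (n - i)%N k2.
Proof.
rewrite /U (leib (fun i => A i k1) (fun j => B j k2)) mulr_sumr -!big_split.
apply: eq_big_nat => i /andP[_ Hi].
rewrite [RHS]/= subSn // !hsS_rec natrB // natrD; ring.
Qed.

Lemma conv_lem n k1 k2 : U n k1 k2 = 'C(k1 + k2, k1)%:R * T n (k1 + k2).
Proof.
elim: n k1 k2 => [|n IH] k1 k2.
  rewrite /U big_nat1 bin0 mul1r.
  case: k1 => [|k1]; case: k2 => [|k2]; rewrite /=;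
    by rewrite ?mulr0 ?mul0r ?mulr1 ?mul1r ?bin0.
rewrite U_step IH hsS_rec.
suff H : \sum_(0 <= i < n.+1) 'C(n, i)%:R * hm a b r1 i k1 * B (n - i) k2 +
  \sum_(0 <= i < n.+1) 'C(n, i)%:R * A i k1 * hm a b r2 (n - i) k2 =
  'C(k1 + k2, k1)%:R * hm a b (r1 + r2) n (k1 + k2).
  by rewrite mulrDr -H; ring.
case: k1 => [|k1]; case: k2 => [|k2].
- rewrite addn0 hm0 mulr0 !big1 ?addr0 // => i _; rewrite hm0 ?mulr0 ?mul0r //.
- rewrite !add0n bin0 mul1r [X in X + _]big1 => [|i _]; last by rewrite hm0 mulr0 mul0r.
  rewrite add0r hmS. under eq_bigr do rewrite hmS.
  by have := IH 0%N k2; rewrite /U add0n bin0 mul1r.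
- rewrite !addn0 binn mul1r [X in _ + X]big1 => [|i _]; last by rewrite hm0 mulr0.
  rewrite addr0 hmS. under eq_bigr do rewrite hmS.
  by have := IH k1 0%N; rewrite /U addn0 binn mul1r.
- under eq_bigr do rewrite hmS. under [X in _ + X]eq_bigr do rewrite hmS.
  have := IH k1 k2.+1; rewrite /U => ->.
  have := IH k1.+1 k2; rewrite /U => ->.
  rewrite !addnS !addSn hmS (binS (k1 + k2).+1 k1) natrD mulrDl addrC.
  done.
Qed.

End Gen.


Section Gen.
Variable F : comNzRingType.
Variables (a b r1 r2 : F).
Notation A := (hsS a b r1).
Notation B := (hsS b a r2).
Notation T := (hsS a b (r1 + r2)).

Definition Wr M n k k2 :=
  \sum_(0 <= j < M) 'C(k + j, k)%:R * A (n + k2)%N (k + j)%N * B j k2.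

Definition Wm M n k k2 := if k is k'.+1 then Wr M n k' k2 else 0.

Definition Zs M n k k2 :=
  \sum_(0 <= j < M) 'C(k + j, k)%:R * A (n + k2)%N (k + j)%N * hm b a r2 j k2.

Lemma X_lem M n k k2 : (n.+1 + k2 < M)%N ->
  \sum_(0 <= j < M) 'C(k + j, k)%:R * hm a b r1 (n + k2)%N (k + j)%N * B j k2 =
  Wm M n k k2 + \sum_(0 <= j < M) 'C(k + j, k)%:R * A (n + k2)%N (k + j)%N * B j.+1 k2.
Proof.
case: M => [//|M] HM.
have Hcut : \sum_(0 <= j < M.+1) 'C(k + j, k)%:R * A (n + k2)%N (k + j)%N * B j.+1 k2 =
           \sum_(0 <= j < M) 'C(k + j, k)%:R * A (n + k2)%N (k + j)%N * B j.+1 k2.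
  apply: sum_cut; first exact: leqnSn.
  move=> j Hj; rewrite hsS_gt ?mulr0 ?mul0r //.
  rewrite addSn ltnS in HM; apply: (leq_trans HM); apply: (leq_trans Hj); apply: leq_addl.
rewrite Hcut {Hcut}; case: k => [|k].
  rewrite /Wm add0r big_nat_recl // hm0 mulr0 mul0r add0r.
  by apply: eq_bigr => j _; rewrite !add0n hmS !bin0.
rewrite /Wm /Wr.
rewrite (eq_bigr (fun j => 'C(k + j, k)%:R * A (n + k2)%N (k + j)%N * B j k2 +
    'C(k + j, k.+1)%:R * A (n + k2)%N (k + j)%N * B j k2)); last first.
  by move=> j _; rewrite addSn binS hmS natrD !mulrDl addrC.
rewrite big_split /=; congr (_ + _).
rewrite big_nat_recl // addn0 bin_small // mul0r mul0r add0r.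
by apply: eq_bigr => j _; rewrite addnS addSn.
Qed.

Lemma W_step M n k k2 : (n.+1 + k2 < M)%N ->
  Wr M n.+1 k k2 = (- a * n%:R + b * k%:R + (r1 + r2)) * Wr M n k k2
     + Wm M n k k2 + Zs M n k k2.
Proof.
move=> HM; rewrite /Wr addSn.
rewrite (eq_bigr (fun j => ('C(k + j, k)%:R * ((- a * (n + k2)%:R + b * (k + j)%:R + r1) *
     A (n + k2)%N (k + j)%N) * B j k2) +
    'C(k + j, k)%:R * hm a b r1 (n + k2)%N (k + j)%N * B j k2)); last first.
  by move=> j _; rewrite hsS_rec mulrDr mulrDl.
rewrite big_split /= X_lem // -/(Wr M n k k2).
rewrite [X in _ + (_ + X)](eq_bigr (fun j => ('C(k + j, k)%:R * A (n + k2)%N (k + j)%N *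
    ((- b * j%:R + a * k2%:R + r2) * B j k2)) +
    'C(k + j, k)%:R * A (n + k2)%N (k + j)%N * hm b a r2 j k2)); last first.
  by move=> j _; rewrite hsS_rec mulrDr.
rewrite [X in _ + (_ + X)]big_split /= -/(Zs M n k k2).
suff -> : \sum_(0 <= i < M) 'C(k + i, k)%:R * ((- a * (n + k2)%:R + b * (k + i)%:R + r1) *
      A (n + k2)%N (k + i)%N) * B i k2 =
   (- a * n%:R + b * k%:R + (r1 + r2)) * Wr M n k k2 -
   \sum_(0 <= i < M) 'C(k + i, k)%:R * A (n + k2)%N (k + i)%N *
         ((- b * i%:R + a * k2%:R + r2) * B i k2).
  ring.
rewrite /Wr mulr_sumr -sumrB; apply: eq_bigr => j _.
rewrite !natrD; ring.
Qed.

Lemma W_base M k k2 : (k2 < M)%N -> Wr M 0 k k2 = 'C(k2, k2)%:R * T 0 k.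
Proof.
move=> HM; rewrite /Wr add0n. rewrite binn mul1r.
rewrite (@sum_cut _ _ k2.+1) //; last first.
  by move=> j Hj; rewrite hsS_gt ?mulr0 ?mul0r // (leq_trans Hj) // leq_addl.
rewrite big_nat_recr //= big_nat_cond big1 ?add0r; last first.
  by move=> j /andP[/andP[_ Hj] _]; rewrite [hsS b a r2 j k2]hsS_gt // mulr0.
case: k => [|k]; first by rewrite !add0n bin0 !hsS_diag !mulr1.
by rewrite hsS_gt ?mulr0 ?mul0r // addSn ltnS leq_addl.
Qed.

Lemma W_lem k2 : forall n k M, (n + k2 < M)%N -> Wr M n k k2 = 'C(n + k2, k2)%:R * T n k.
Proof.
elim/ltn_ind: k2 => k2 IHo n; elim: n => [|n IHi] k M HM.
  by rewrite W_base // add0n.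
rewrite W_step // IHi; last by apply: leq_trans HM; rewrite addSn.
have -> : Wm M n k k2 = 'C(n + k2, k2)%:R * hm a b (r1 + r2) n k.
  case: k => [|k]; first by rewrite /= mulr0.
  by rewrite /= IHi // (leq_trans _ HM) // addSn.
case: k2 IHo HM IHi => [|k2] IHo HM IHi.
  rewrite /Zs big1; last by move=> j _; rewrite hm0 mulr0.
  by rewrite !addn0 !bin0 !mul1r addr0 hsS_rec.
have -> : Zs M n k k2.+1 = Wr M n.+1 k k2.
  have Heq : (n + k2.+1 = n.+1 + k2)%N by rewrite addnS addSn.
  by rewrite /Zs /Wr Heq; apply: eq_bigr => j _; rewrite hmS.
rewrite (IHo k2 (ltnSn k2) n.+1 k M); last by apply: leq_trans HM; rewrite addnS.
have E1 : (n + k2.+1 = n.+1 + k2)%N by rewrite addnS addSn.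
have E2 : (n.+1 + k2.+1 = (n.+1 + k2).+1)%N by rewrite addnS.
rewrite E1 E2 binS natrD hsS_rec; ring.
Qed.

End Gen.

Lemma fact_div (R : realType) m n : (m <= n)%N ->
  (n`!)%:R / ((m`!)%:R * ((n - m)`!)%:R) = 'C(n, m)%:R :> R[i].
Proof.
move=> H; rewrite -(bin_fact H) !natrM mulfK //.
by rewrite mulf_neq0 // pnatr_eq0 -lt0n fact_gt0.
Qed.

Theorem mainTheorem13 (R : realType) :
  (* (i) *)
  (forall a b c r1 r2 : R[i],
      hsMat a c (r1 + r2) = ltmul (hsMat a b r1) (hsMat b c r2)) /\
  (forall a : R[i], hsMat a a 0 = @ltid R[i]) /\
  (forall a b r : R[i],
      ltmul (hsMat a b r) (hsMat b a (- r)) = @ltid R[i] /\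
      ltmul (hsMat b a (- r)) (hsMat a b r) = @ltid R[i]) /\
  (* (ii) *)
  (forall (a b r1 r2 : R[i]) (n k k1 k2 : nat), k = (k1 + k2)%N ->
      (k`!)%:R / ((k1`!)%:R * (k2`!)%:R) * hsS a b (r1 + r2) n k =
      \sum_(n1 < n.+1 | (k1 <= n1)%N && (k2 <= n - n1)%N)
        (n`!)%:R / ((n1`!)%:R * ((n - n1)`!)%:R)
          * hsS a b r1 n1 k1 * hsS a b r2 (n - n1) k2) /\
  (* (iii) *)
  (forall (a b r1 r2 : R[i]) (k n1 n k2 : nat), n1 = (n + k2)%N ->
      (n1`!)%:R / ((n`!)%:R * (k2`!)%:R) * hsS a b (r1 + r2) n k =
      \sum_(n2 < n1.+1 | (k + n2 <= n1)%N && (k2 <= n2)%N)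
        ((k + n2)`!)%:R / ((k`!)%:R * (n2`!)%:R)
          * hsS a b r1 n1 (k + n2) * hsS b a r2 n2 k2).
Proof.
Proof.
split.
  move=> a b c r1 r2; apply: functional_extensionality => n.
  apply: functional_extensionality => k; exact: comp_lem.
split.
  move=> a; apply: functional_extensionality => n.
  apply: functional_extensionality => k; exact: id_lem.
split.
  move=> a b r; split; apply: functional_extensionality => n;
  apply: functional_extensionality => k; rewrite /ltmul /hsMat -comp_lem ?subrr ?addNr;
  exact: id_lem.
split.
  move=> a b r1 r2 n k k1 k2 ->.
  have := fact_div R (leq_addr k2 k1); rewrite addKn => ->.
  transitivity (@U _ a b r1 r2 n k1 k2); first by rewrite conv_lem.
  rewrite /U [RHS]big_mkcond /= big_mkord.
  apply: eq_bigr => i _; have Hi := ltn_ord i; case: ifP => [_|/negbT].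
    by rewrite fact_div.
  rewrite negb_and -!ltnNge => /orP[H|H].
    by rewrite [hsS a b r1 i k1]hsS_gt // mulr0 !mul0r.
  by rewrite [hsS a b r2 (n - i) k2]hsS_gt // !mulr0.
move=> a b r1 r2 k n1 n k2 ->.
have := fact_div R (leq_addl n k2); rewrite addnK [X in _ / X]mulrC => ->.
transitivity (@Wr _ a b r1 r2 (n + k2).+1 n k k2); first by rewrite W_lem.
rewrite /Wr [RHS]big_mkcond /= big_mkord.
apply: eq_bigr => j _; have Hj := ltn_ord j; case: ifP => [_|/negbT].
  by have := fact_div R (leq_addr j k); rewrite addKn => ->.
rewrite negb_and -!ltnNge => /orP[H|H].
  by rewrite [hsS a b r1 (n + k2) (k + j)]hsS_gt // mulr0 !mul0r.
by rewrite [hsS b a r2 j k2]hsS_gt // !mulr0.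
Qed.
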